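(* Let $\Omega\subset\{1,\dots,|\mathcal{Y}|\}$ with $|\Omega|=|\mathcal{X}|$ be such that $M_\Omega$ is invertible. Then $\mathbf{1}^T\left(M_{\Omega}^{-1}MP_Y\right)=1$. Furthermore, for every $J_u\in\mathbb{R}^{|\mathcal{X}|}$ with $\sum_x J_u(x)=0$, $\mathbf{1}^T\left(M_{\Omega}^{-1}M\begin{bmatrix}P_{X|Y_1}^{-1}J_u\\0\end{bmatrix}\right)=0$.
   Context: Setting: $X,Y$ on finite alphabets with $|\mathcal{X}|<|\mathcal{Y}|$, joint pmf $P_{XY}$ with marginal vectors $P_X,P_Y$ having positive entries. $P_{X|Y}\in\mathbb{R}^{|\mathcal{X}|\times|\mathcal{Y}|}$ (columns are the conditional distributions $P_{X|Y=y}$) has full row rank, with $P_{X|Y}=[P_{X|Y_1},P_{X|Y_2}]$ where $P_{X|Y_1}$ (the first $|\mathcal{X}|$ columns) is invertible. With an SVD $P_{X|Y}=U\Sigma V^T$, $V=[v_1,\dots,v_{|\mathcal{Y}|}]$, set $M=[v_1,\dots,v_{|\mathcal{X}|}]^T$. $M_\Omega\in\mathbb{R}^{|\mathcal{X}|\times|\mathcal{X}|}$ is the submatrix of $M$ formed by the columns indexed by $\Omega$ (in increasing order). The zero block has size $|\mathcal{Y}|-|\mathcal{X}|$; $\mathbf{1}$ is the all-ones vector. *)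

(* Defs.v *)
From HB Require Import structures.
From mathcomp Require Import all_boot all_order all_algebra.
Set Implicit Arguments. Unset Strict Implicit. Unset Printing Implicit Defensive.
Import Order.TTheory GRing.Theory Num.Theory.
Local Open Scope ring_scope.

(* Alphabets: X = 'I_n, Y = 'I_(n + k) (so |X| < |Y| iff 0 < k). *)

Definition marginalX (R : ringType) (n m : nat) (P : 'M[R]_(n, m)) : 'cV[R]_n :=
  \col_(x < n) \sum_(y < m) P x y.

Definition marginalY (R : ringType) (n m : nat) (P : 'M[R]_(n, m)) : 'cV[R]_m :=
  \col_(y < m) \sum_(x < n) P x y.

Definition condXY (R : fieldType) (n m : nat) (P : 'M[R]_(n, m)) : 'M[R]_(n, m) :=
  \matrix_(x < n, y < m) (P x y / marginalY P y 0).

(* M = [v_1, ..., v_n]^T : first n columns of V, transposed. *)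
Definition Mmat (R : ringType) (n k : nat) (V : 'M[R]_(n + k)) : 'M[R]_(n, n + k) :=
  (lsubmx V)^T.

(* M_Omega: the columns of M indexed by Omega, in increasing order
   (enum of a set of ordinals lists its elements in increasing order).
   The default value of nth is irrelevant when #|Om| = n. *)
Definition Msub (R : ringType) (n k : nat) (M : 'M[R]_(n, n + k))
    (Om : {set 'I_(n + k)}) : 'M[R]_n :=
  \matrix_(i < n, j < n) M i (nth (lshift k j) (enum Om) j).

Definition sum_col (R : ringType) (m : nat) (v : 'cV[R]_m) : R :=
  \sum_(i < m) v i 0.

(* Main.v *)
Require Import Defs.
From HB Require Import structures.
From mathcomp Require Import all_boot all_order all_algebra.
Import Order.TTheory GRing.Theory Num.Theory.
Local Open Scope ring_scope.

Lemma sum_colE (R : ringType) (m : nat) (v : 'cV[R]_m) :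
  sum_col v = ((const_mx 1 : 'rV[R]_m) *m v) 0 0.
Proof. rewrite mxE /sum_col; apply: eq_bigr => i _; by rewrite mxE mul1r. Qed.

Theorem proposition4 (R : realFieldType) (n k : nat) (P : 'M[R]_(n, n + k))
    (U : 'M[R]_n) (S : 'M[R]_(n, n + k)) (V : 'M[R]_(n + k))
    (Om : {set 'I_(n + k)}) :
  (0 < k)%N ->
  (* P is a joint pmf with positive marginals *)
  (forall x y, 0 <= P x y) ->
  \sum_(x < n) \sum_(y < n + k) P x y = 1 ->
  (forall x, 0 < marginalX P x 0) ->
  (forall y, 0 < marginalY P y 0) ->
  (* P_{X|Y} has full row rank and its first n columns form an invertible matrix *)
  \rank (condXY P) = n ->
  lsubmx (condXY P) \in unitmx ->
  (* SVD  P_{X|Y} = U S V^T *)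
  U^T *m U = 1%:M ->
  V^T *m V = 1%:M ->
  (forall (i : 'I_n) (j : 'I_(n + k)), val i != val j -> S i j = 0) ->
  (forall i : 'I_n, 0 <= S i (lshift k i)) ->
  (forall i j : 'I_n, (i <= j)%N -> S j (lshift k j) <= S i (lshift k i)) ->
  condXY P = U *m S *m V^T ->
  (* Omega *)
  #|Om| = n ->
  Msub (Mmat V) Om \in unitmx ->
  sum_col (invmx (Msub (Mmat V) Om) *m Mmat V *m marginalY P) = 1 /\
  (forall Ju : 'cV[R]_n, \sum_(x < n) Ju x 0 = 0 ->
     sum_col (invmx (Msub (Mmat V) Om) *m Mmat V
                *m col_mx (invmx (lsubmx (condXY P)) *m Ju) (0 : 'cV[R]_k)) = 0).
Proof.
move=> _ _ Psum _ PYpos _ Lunit _ _ Sdiag _ _ svd _ Munit.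
set M := Mmat V.
set one : 'rV[R]_n := const_mx 1.
have colsum : (const_mx 1 : 'rV[R]_n) *m condXY P = const_mx 1.
  apply/matrixP => i y; rewrite !mxE.
  under eq_bigr do rewrite !mxE mul1r.
  rewrite -mulr_suml divff // lt0r_neq0 //.
  by have := PYpos y; rewrite mxE.
have rS : rsubmx S = 0.
  apply/matrixP => i j; rewrite !mxE Sdiag //=.
  by rewrite neq_ltn (leq_trans (ltn_ord i)) ?leq_addr.
have fac : condXY P = (U *m lsubmx S) *m M.
  rewrite svd -{1}(hsubmxK S) rS -(hsubmxK V) tr_row_mx -mulmxA mul_row_col.
  by rewrite mul0mx addr0 mulmxA /M /Mmat.
set a := one *m (U *m lsubmx S).
have aM : a *m M = const_mx 1 by rewrite /a -mulmxA -fac colsum.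
have aMs : a *m Msub M Om = one.
  apply/matrixP => i j; rewrite !mxE.
  have := congr1 (fun A : 'rV[R]_(n+k) => A i (nth (lshift k j) (enum Om) j)) aM.
  rewrite !mxE => <-; apply: eq_bigr => l _; by rewrite !mxE.
have key : forall z : 'cV[R]_(n + k),
    sum_col (invmx (Msub M Om) *m M *m z) = sum_col z.
  move=> z; rewrite !sum_colE !mulmxA -/one -aMs mulmxK // aM //.
split.
  rewrite key /sum_col.
  under eq_bigr do rewrite mxE.
  by rewrite exchange_big.
move=> Ju HJu; rewrite key.
have -> : sum_col (col_mx (invmx (lsubmx (condXY P)) *m Ju) (0 : 'cV[R]_k))
   = sum_col (invmx (lsubmx (condXY P)) *m Ju).
  rewrite /sum_col big_split_ord /=.
  under [X in _ + X = _]eq_bigr do rewrite col_mxEd mxE.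
  rewrite big1_eq addr0; apply: eq_bigr => i _; by rewrite col_mxEu.
have oneL : one *m lsubmx (condXY P) = one.
  apply/matrixP => i j.
  have := congr1 (fun A : 'rV[R]_(n+k) => A i (lshift k j)) colsum; rewrite !mxE => <-.
  apply: eq_bigr => l _; by rewrite !mxE.
rewrite sum_colE mulmxA -/one -{1}oneL mulmxK //.
rewrite -sum_colE -HJu; exact: erefl.
Qed.
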